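(* Let $P$ and $Q$ be two probability distributions on a finite set $\mathcal{A}$ that are positive on $\mathcal{A}$. Then $$\min_{x\in\mathcal{A}}\frac{P(x)}{Q(x)}\cdot\chi^2(Q,P)\;\le\;\frac{\chi^2(P,Q)}{1+\chi^2(P,Q)}\;\le\;\max_{x\in\mathcal{A}}\frac{P(x)}{Q(x)}\cdot\chi^2(Q,P).$$
   Context: For positive probability distributions $P,Q$ on a finite set $\mathcal{A}$, the chi-squared divergence is $\chi^2(P,Q)=\sum_{x\in\mathcal{A}}\frac{(P(x)-Q(x))^2}{Q(x)}$; thus $\chi^2(Q,P)=\sum_{x\in\mathcal{A}}\frac{(Q(x)-P(x))^2}{P(x)}$. *)

(* Defs.v *)
From mathcomp Require Import all_boot all_order all_algebra.
Set Implicit Arguments. Unset Strict Implicit. Unset Printing Implicit Defensive.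
Import Order.TTheory GRing.Theory Num.Theory.
Local Open Scope ring_scope.

Definition chi2 (R : realFieldType) (A : finType) (P Q : A -> R) : R :=
  \sum_(x : A) (P x - Q x) ^+ 2 / Q x.

(* min / max over the (nonempty) finite set A of f; x0 : A is any element,
   used only as the seed of the iterated min/max. *)
Definition fmin (R : realFieldType) (A : finType) (x0 : A) (f : A -> R) : R :=
  \big[Num.min/f x0]_(x : A) f x.
Definition fmax (R : realFieldType) (A : finType) (x0 : A) (f : A -> R) : R :=
  \big[Num.max/f x0]_(x : A) f x.

(* Main.v *)
Require Import Defs.
From mathcomp Require Import all_boot all_order all_algebra.
From mathcomp Require Import ring lra.
Import Order.TTheory GRing.Theory Num.Theory.
Local Open Scope ring_scope.

Lemma fmin_le (R : realFieldType) (A : finType) (x0 : A) (f : A -> R) x :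
  fmin x0 f <= f x.
Proof. by rewrite /fmin (bigD1 x) //= ge_min lexx. Qed.

Lemma fmax_ge (R : realFieldType) (A : finType) (x0 : A) (f : A -> R) x :
  f x <= fmax x0 f.
Proof. by rewrite /fmax (bigD1 x) //= le_max lexx. Qed.

Lemma fmin_gt0 (R : realFieldType) (A : finType) (x0 : A) (f : A -> R) :
  (forall x, 0 < f x) -> 0 < fmin x0 f.
Proof.
move=> h; rewrite /fmin; apply: (big_ind (fun y => 0 < y)) => //.
by move=> a b ha hb; rewrite lt_min ha hb.
Qed.

Lemma chi2E (R : realFieldType) (A : finType) (P Q : A -> R)
  (hQ : forall x, 0 < Q x)
  (sP : \sum_(x : A) P x = 1) (sQ : \sum_(x : A) Q x = 1) :
  chi2 P Q = \sum_x P x ^+ 2 / Q x - 1.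
Proof.
rewrite /chi2.
have -> : \sum_x (P x - Q x) ^+ 2 / Q x
   = \sum_x (P x ^+ 2 / Q x - 2 * P x + Q x).
  apply: eq_bigr => x _; have := hQ x; rewrite lt0r => /andP [hq _]; by field.
rewrite big_split /= big_split /= sumrN -mulr_sumr sP sQ; ring.
Qed.

Theorem corollary2 (R : realFieldType) (A : finType) (x0 : A) (P Q : A -> R)
  (hP : forall x, 0 < P x) (hQ : forall x, 0 < Q x)
  (sP : \sum_(x : A) P x = 1) (sQ : \sum_(x : A) Q x = 1) :
  fmin x0 (fun x => P x / Q x) * chi2 Q P <= chi2 P Q / (1 + chi2 P Q)
  /\ chi2 P Q / (1 + chi2 P Q) <= fmax x0 (fun x => P x / Q x) * chi2 Q P.
Proof.
set m := fmin x0 _; set M := fmax x0 _.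
have c0 : 0 <= chi2 P Q.
  by apply: sumr_ge0 => x _; apply: divr_ge0; [exact: sqr_ge0 | exact: ltW].
have hS : 0 < 1 + chi2 P Q by lra.
split; last first.
  have h1 : chi2 P Q <= M * chi2 Q P.
    rewrite /chi2 mulr_sumr; apply: ler_sum => x _.
    have hx := @fmax_ge _ _ x0 (fun x => P x / Q x) x; rewrite -/M /= in hx.
    have hp := hP x; have hq := hQ x.
    have -> : (P x - Q x) ^+ 2 / Q x = (P x / Q x) * ((Q x - P x) ^+ 2 / P x).
      field; apply/andP; split; rewrite lt0r_neq0 //.
    apply: ler_wpM2r => //; apply: divr_ge0; [exact: sqr_ge0 | exact: ltW].
  rewrite ler_pdivrMr //; nra.
set S := \sum_x P x ^+ 2 / Q x.
set T := \sum_x Q x ^+ 2 / P x.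
have eS : chi2 P Q = S - 1 by apply: chi2E.
have eT : chi2 Q P = T - 1 by apply: chi2E.
have m0 : 0 < m by apply: fmin_gt0 => x; apply: divr_gt0.
have S1 : 1 <= S by lra.
have key : \sum_x S ^+ 2 * m * (Q x ^+ 2 / P x)
   <= \sum_x ((S ^+ 2 + 2 * m * S) * Q x - (2 * S + m) * P x + P x ^+ 2 / Q x).
  apply: ler_sum => x _.
  have hx := @fmin_le _ _ x0 (fun x => P x / Q x) x; rewrite -/m /= in hx.
  have hp := hP x; have hq := hQ x.
  have hpm : m * Q x <= P x by rewrite -ler_pdivlMr.
  rewrite -subr_ge0.
  have -> : (S ^+ 2 + 2 * m * S) * Q x - (2 * S + m) * P x + P x ^+ 2 / Q x
     - S ^+ 2 * m * (Q x ^+ 2 / P x)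
     = (P x - m * Q x) * (P x - S * Q x) ^+ 2 / (P x * Q x).
    field; apply/andP; split; rewrite lt0r_neq0 //.
  apply: divr_ge0; last by apply: mulr_ge0; exact: ltW.
  by apply: mulr_ge0; [rewrite subr_ge0 | exact: sqr_ge0].
rewrite -mulr_sumr -/T big_split /= big_split /= in key.
rewrite sumrN -!mulr_sumr sQ sP -/S in key.
rewrite eS eT ler_pdivlMr //.
have hm : 0 <= m * (S - 1) ^+ 2 by apply: mulr_ge0; [exact: ltW | exact: sqr_ge0].
have h2 : m * (T - 1) * (1 + (S - 1)) * S <= (S - 1) * S.
  have -> : m * (T - 1) * (1 + (S - 1)) * S = S ^+ 2 * m * T - m * S ^+ 2 by ring.
  have -> : (S - 1) * S = S ^+ 2 - S by ring.
  rewrite !mulr1 in key.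
  have e : m * (S - 1) ^+ 2 = m * S ^+ 2 - 2 * m * S + m by ring.
  have e2 : (S ^+ 2 + 2 * m * S) - (2 * S + m) + S = S ^+ 2 + 2 * m * S - S - m by ring.
  lra.
rewrite ler_pM2r in h2; [exact: h2 | lra]. lra.
Qed.
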